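(* Let $\delta\in\mathcal D^0$ and let $C$ be an absolutely continuous copula with multidiagonal $\delta$ and density $c$. Then for a.e. $u\in I^d$, for every $2\le i\le d$ and every $s\in I\setminus\Psi_i^\delta$, $c(u)\mathbf 1_{\{u_{(i-1)}<s<u_{(i)}\}}=0$. Equivalently, $c=0$ a.e. on $I^d\setminus L_\delta$.
   Context: $I=[0,1]$; $u_{(1)}\le\dots\le u_{(d)}$ are the ordered coordinates of $u$. A copula is a cdf on $\mathbb R^d$ with uniform-on-$I$ coordinates. For a copula $C$ and $U\sim C$ with order statistics $U_{(i)}$, the multidiagonal is $(\delta_{(i)})$ with $\delta_{(i)}(t)=\mathbb P(U_{(i)}\le t)$. $\mathcal D^0$ is the set of multidiagonals of absolutely continuous copulas. For $2\le i\le d$, $\Psi_i^\delta=\{s\in(0,1):\delta_{(i-1)}(s)>\delta_{(i)}(s)\}$, and $L_\delta=\{u\in I^d:(u_{(i-1)},u_{(i)})\subset\Psi_i^\delta\text{ for all }2\le i\le d\}$. *)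

(* Defs.v *)
From HB Require Import structures.
From mathcomp Require Import all_boot all_order all_algebra.
From mathcomp Require Import all_classical all_reals all_analysis.
Set Implicit Arguments. Unset Strict Implicit. Unset Printing Implicit Defensive.
Import Order.TTheory GRing.Theory Num.Theory.
Local Open Scope classical_set_scope.
Local Open Scope ring_scope.

Section Copulas.
Variable R : realType.

(* For nonnegative measurable f this is the integral of f against the
   n-dimensional Lebesgue measure (Tonelli). *)
Fixpoint intn (n : nat) : (n.-tuple R -> \bar R) -> \bar R :=
  match n return (n.-tuple R -> \bar R) -> \bar R with
  | 0 => fun f => f [tuple]
  | n'.+1 => fun f =>
      (\int[@lebesgue_measure R]_x intn (fun t : n'.-tuple R => f [tuple of x :: t]))%E
  end.

Definition lebn n (A : set (n.-tuple R)) : \bar R := intn (fun u => (\1_A u)%:E).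

Definition lebn_null n (N : set (n.-tuple R)) : Prop :=
  exists A : set (n.-tuple R), [/\ measurable A, N `<=` A & lebn A = 0%E].

Definition unit_cube n : set (n.-tuple R) :=
  [set u | forall j : 'I_n, 0 <= tnth u j <= 1].

Definition unif_cdf (t : R) : R := Num.min 1 (Num.max 0 t).

(* c is the density of an absolutely continuous copula C on R^d:
   the law of U ~ C is the probability measure A |-> \int_A c, its
   cdf is C, and each coordinate is uniform on I. *)
Definition abs_cont_copula_density d (C c : d.-tuple R -> R) : Prop :=
  [/\ measurable_fun [set: d.-tuple R] c,
      (forall v, 0 <= c v),
      intn (fun v => (c v)%:E) = 1%E,
      (forall (j : 'I_d) (t : R),
          intn (fun v => (c v * \1_[set w : d.-tuple R | tnth w j <= t] v)%:E)
          = (unif_cdf t)%:E)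
    & (forall u : d.-tuple R,
          (C u)%:E = intn (fun v =>
             (c v * \1_[set w : d.-tuple R | forall j, tnth w j <= tnth u j] v)%:E))].

(* order statistics, 1-based: ostat u i = u_(i) for 1 <= i <= d *)
Definition ostat d (u : d.-tuple R) (i : nat) : R :=
  nth 0 (sort <=%R (tval u)) i.-1.

(* multidiagonal of the copula with density c (1-based):
   mdiag c i t = P(U_(i) <= t) = \int c 1_{u_(i) <= t} *)
Definition mdiag d (c : d.-tuple R -> R) (i : nat) (t : R) : \bar R :=
  intn (fun v => (c v * \1_[set w : d.-tuple R | ostat w i <= t] v)%:E).

Definition Psi d (c : d.-tuple R -> R) (i : nat) : set R :=
  [set s | 0 < s < 1 /\ (mdiag c i s < mdiag c i.-1 s)%E].

Definition Ldelta d (c : d.-tuple R -> R) : set (d.-tuple R) :=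
  [set u | unit_cube u /\
     forall i : nat, (2 <= i <= d)%N ->
       [set s | ostat u i.-1 < s < ostat u i] `<=` Psi c i].

End Copulas.

(* Main.v *)
Require Import Defs.
From HB Require Import structures.
From mathcomp Require Import all_boot all_order all_algebra.
From mathcomp Require Import all_classical all_reals all_analysis.
From mathcomp Require Import measurable_realfun.
Import Order.TTheory GRing.Theory Num.Theory.
Local Open Scope classical_set_scope.
Local Open Scope ring_scope.
Local Open Scope ereal_scope.

Section S.
Variable R : realType.
Implicit Types n : nat.

Lemma intn_ge0 n (f : n.-tuple R -> \bar R) : (forall t, 0 <= f t) -> 0 <= intn f.
Proof.
elim: n f => [|n IH] f f0 /=; first exact: f0.
by apply: integral_ge0 => x _; apply: IH => t; exact: f0.
Qed.

Lemma intn_meas n : forall d' (T : measurableType d') (f : T -> n.-tuple R -> \bar R),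
  measurable_fun setT (fun p : T * n.-tuple R => f p.1 p.2) ->
  (forall x t, 0 <= f x t) -> measurable_fun setT (fun x => intn (f x)).
Proof.
elim: n => [|n IH] d' T f mf f0 /=.
  apply: (measurableT_comp (f := fun p : T * 0.-tuple R => f p.1 p.2)
     (g := fun x => (x, [tuple]))) => //.
pose g (p : T * R) (t : n.-tuple R) := f p.1 [tuple of p.2 :: t].
have mg : measurable_fun setT (fun q : (T * R) * n.-tuple R => g q.1 q.2).
  apply: (measurableT_comp (f := fun p : T * n.+1.-tuple R => f p.1 p.2)
     (g := fun q : (T * R) * n.-tuple R => (q.1.1, [tuple of q.1.2 :: q.2]))) => //.
  apply: (@measurable_fun_pair _ _ _ _ _ _ (fun q : (T * R) * n.-tuple R => q.1.1)
     (fun q : (T * R) * n.-tuple R => [tuple of q.1.2 :: q.2])).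
    exact: (measurableT_comp measurable_fst measurable_fst).
  apply: (@measurable_cons _ _ _ _ (fun q : (T * R) * n.-tuple R => q.1.2) n
      (fun q : (T * R) * n.-tuple R => q.2)).
    exact: (measurableT_comp measurable_snd measurable_fst).
  exact: measurable_snd.
have := IH _ _ g mg (fun x t => f0 _ _).
move=> mG.
have := (@measurable_fun_fubini_tonelli_F _ _ _ _ _ (@lebesgue_measure R)
  (fun p => intn (g p)) mG (fun p => @intn_ge0 _ (g p) (fun t => f0 _ _))).
by [].
Qed.

Lemma meas_sec n (f : n.+1.-tuple R -> \bar R) (y : R) :
  measurable_fun setT f -> measurable_fun setT (fun t : n.-tuple R => f [tuple of y :: t]).
Proof.
move=> mf; apply: (measurableT_comp (f := f) (g := fun t : n.-tuple R => [tuple of y :: t])) => //.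
exact: (@measurable_cons _ _ _ _ (fun _ : n.-tuple R => y) n (fun t => t)).
Qed.

Lemma intn_meas1 n (f : n.+1.-tuple R -> \bar R) :
  measurable_fun setT f -> (forall t, 0 <= f t) ->
  measurable_fun setT (fun y : R => intn (fun t : n.-tuple R => f [tuple of y :: t])).
Proof.
move=> mf f0.
apply: (@intn_meas n _ _ (fun (y : R) (t : n.-tuple R) => f [tuple of y :: t])) => //.
apply: (measurableT_comp (f := f) (g := fun p : R * n.-tuple R => [tuple of p.1 :: p.2])) => //.
exact: (@measurable_cons _ _ _ _ (fun p : R * n.-tuple R => p.1) n (fun p => p.2)
   measurable_fst measurable_snd).
Qed.

Lemma intn_add n (f g : n.-tuple R -> \bar R) :
  measurable_fun setT f -> measurable_fun setT g ->
  (forall t, 0 <= f t) -> (forall t, 0 <= g t) ->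
  intn (fun t => f t + g t) = intn f + intn g.
Proof.
elim: n f g => [|n IH] f g mf mg f0 g0 //=.
have F0 : forall y, 0 <= intn (fun t : n.-tuple R => f [tuple of y :: t]).
  by move=> y; apply: intn_ge0 => t; exact: f0.
have G0 : forall y, 0 <= intn (fun t : n.-tuple R => g [tuple of y :: t]).
  by move=> y; apply: intn_ge0 => t; exact: g0.
rewrite -ge0_integralD //; try exact: intn_meas1.
apply: eq_integral => y _.
exact: (IH (fun t => f [tuple of y :: t]) (fun t => g [tuple of y :: t])
  (@meas_sec n f y mf) (@meas_sec n g y mg) (fun t => f0 _) (fun t => g0 _)).
Qed.

Lemma intn_null n (fk : nat -> n.-tuple R -> \bar R) (g : n.-tuple R -> \bar R) :
  (forall k, measurable_fun setT (fk k)) -> (forall k t, 0 <= fk k t) ->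
  measurable_fun setT g -> (forall t, 0 <= g t) ->
  (forall k, intn (fk k) = 0) -> (forall t, g t != 0 -> exists k, fk k t != 0) ->
  intn g = 0.
Proof.
elim: n fk g => [|n IH] fk g mfk fk0 mg g0 int0 gfk /=.
  apply/eqP; apply/negPn/negP => /gfk [k]; by move: (int0 k) => /= ->; rewrite eqxx.
have aeF : forall k, ae_eq (@lebesgue_measure R) setT
    (fun y => intn (fun t : n.-tuple R => fk k [tuple of y :: t])) (cst 0).
  move=> k; apply/ae_eq_integral_abs => //.
    exact: intn_meas1.
  transitivity (\int[@lebesgue_measure R]_y intn (fun t : n.-tuple R => fk k [tuple of y :: t])); last exact: int0 k.
  apply: eq_integral => y _; rewrite gee0_abs //; apply: intn_ge0 => t; exact: fk0.
have aeG : ae_eq (@lebesgue_measure R) setT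
    (fun y => intn (fun t : n.-tuple R => g [tuple of y :: t])) (cst 0).
  apply: filterS (ae_foralln aeF) => y Hy _ /=.
  apply: (IH (fun k t => fk k [tuple of y :: t])).
  - by move=> k; exact: meas_sec.
  - by move=> k t; exact: fk0.
  - exact: meas_sec.
  - by move=> t; exact: g0.
  - by move=> k; exact: Hy.
  - by move=> t /gfk.
rewrite (ae_eq_integral (cst 0) _ measurableT _ _ aeG) ?integral0 //.
exact: intn_meas1.
Qed.

End S.

Local Close Scope ereal_scope.
Section C.
Variable R : realType.

Lemma sorted_nth_le (s : seq R) j t : sorted <=%R s -> (j < size s)%N ->
  (nth 0 s j <= t) = (j < count (fun x : R => (x <= t)%R) s)%N.
Proof.
elim: s j => [|x s IH] j //= Hs Hj.
have Hs' : sorted <=%R s := path_sorted Hs.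
have allx : all (fun y => x <= y) s := order_path_min le_trans Hs.
have c0 : t < x -> count (fun y : R => (y <= t)%R) s = 0%N.
  move=> tx; apply/eqP; rewrite -leqn0 leqNgt -has_count; apply/hasPn => y ys.
  rewrite -ltNge; exact: (lt_le_trans tx (allP allx y ys)).
case: j Hj => [|j] Hj /=.
  case: (leP x t) => hxt //=; by rewrite c0.
rewrite IH //; case: (leP x t) => hxt /=; first by rewrite add1n ltnS.
by rewrite c0.
Qed.

Lemma ostat_leE d (w : d.-tuple R) k t : (1 <= k <= d)%N ->
  (ostat w k <= t) = (k <= count (fun x : R => (x <= t)%R) w)%N.
Proof.
move=> /andP[k1 kd]; rewrite /ostat sorted_nth_le; last 2 first.
- exact: (sort_sorted le_total).
- by rewrite size_sort size_tuple; case: k k1 kd.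
have hp : perm_eq (sort <=%R (tval w)) w by rewrite perm_sort.
rewrite (permP hp).
by case: k k1 kd.
Qed.

Lemma count_sum d (w : d.-tuple R) t :
  (count (fun x : R => (x <= t)%R) w)%:R = \sum_(j < d) \1_(`]-oo, t]%classic) (tnth w j) :> R.
Proof.
rewrite -[in LHS](map_tnth_enum w) count_map -sum1_count natr_sum big_enum_cond /=.
rewrite big_mkcond /=; apply: eq_bigr => j _.
rewrite indicE; case: (boolP (tnth w j <= t)) => h.
  by rewrite mem_set //= in_itv /= h.
by rewrite memNset //= in_itv /= (negbTE h).
Qed.

Lemma measurable_S d k t : (1 <= k <= d)%N ->
  measurable [set w : d.-tuple R | ostat w k <= t].
Proof.
move=> hk.
pose phi := fun w : d.-tuple R => \sum_(j < d) \1_(`]-oo, t]%classic) (tnth w j) : R.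
have mphi : measurable_fun setT phi.
  apply: measurable_sum => j.
  apply: (measurableT_comp (f := \1_(`]-oo, t]%classic) : R -> R)).
    exact: measurable_indic.
  exact: measurable_tnth.
have -> : [set w : d.-tuple R | ostat w k <= t] = phi @^-1` `[k%:R, +oo[%classic.
  apply/seteqP; split => w /=; rewrite in_itv /= andbT /phi -count_sum ler_nat ostat_leE //.
have := mphi measurableT _ (measurable_itv `[k%:R, +oo[).
by rewrite setTI.
Qed.

Lemma ostat_cube d (u : d.-tuple R) k : unit_cube u -> (1 <= k <= d)%N ->
  0 <= ostat u k <= 1.
Proof.
move=> hu /andP[k1 kd]; rewrite /ostat.
have : nth 0 (sort <=%R (tval u)) k.-1 \in tval u.
  have hp : perm_eq (sort <=%R (tval u)) u by rewrite perm_sort.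
  rewrite -(perm_mem hp); apply: mem_nth.
  by rewrite size_sort size_tuple; case: k k1 kd.
by move=> /tnthP [j ->]; exact: hu.
Qed.

End C.
Arguments measurable_S {R d k} t.
Arguments ostat_cube {R d u k}.
Arguments ostat_leE {R d} w k t.

Lemma i_bounds i d : (2 <= i <= d)%N -> (1 <= i.-1 <= d)%N /\ (1 <= i <= d)%N.
Proof. case: i => [|[|i]] //= h; split => //; exact: ltnW. Qed.
Arguments i_bounds {i d}.
Lemma i_mono i n : (2 <= i)%N -> (i <= n)%N -> (i.-1 <= n)%N.
Proof. by case: i => [|[|i]] //= _ /ltnW. Qed.

Section Main.
Variables (R : realType) (d : nat) (C c : d.-tuple R -> R).
Hypothesis H : abs_cont_copula_density C c.

Let mc : measurable_fun setT c. Proof. by case: H. Qed.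
Let c0 : forall v, 0 <= c v. Proof. by case: H. Qed.
Let c1 : intn (fun v => (c v)%:E) = 1%E. Proof. by case: H. Qed.

Let ind0 (A : set (d.-tuple R)) v : 0 <= \1_A v :> R.
Proof. by rewrite indicE ler0n. Qed.

Let mcA (A : set (d.-tuple R)) : measurable A ->
  measurable_fun setT (fun v => (c v * \1_A v)%:E).
Proof.
move=> mA; apply/measurable_EFinP; apply: measurable_funM => //;
  exact: measurable_indic.
Qed.

Let cA0 (A : set (d.-tuple R)) v : (0 <= (c v * \1_A v)%:E)%E.
Proof. by rewrite lee_fin mulr_ge0. Qed.

Let mI (A : set (d.-tuple R)) : measurable A ->
  measurable_fun setT (fun v => (\1_A v : R)%:E).
Proof. by move=> mA; apply/measurable_EFinP; exact: measurable_indic. Qed.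

Let I0 (A : set (d.-tuple R)) v : (0 <= (\1_A v : R)%:E)%E.
Proof. by rewrite lee_fin. Qed.

Lemma intn0 n : intn (fun _ : n.-tuple R => 0%E) = 0%E.
Proof.
elim: n => [|n IH] //=.
by rewrite (eq_integral (fun _ => 0%E)) ?integral0 // => y _; exact: IH.
Qed.

Definition Sk k t := [set w : d.-tuple R | ostat w k <= t].

Lemma mdiag_fin k t : (1 <= k <= d)%N -> mdiag c k t \is a fin_num.
Proof.
move=> hk.
have mS := measurable_S t hk.
have e : intn (fun v => (c v)%:E) = (mdiag c k t +
   intn (fun v => (c v * \1_(~` Sk k t) v)%:E))%E.
  rewrite /mdiag -intn_add //; try exact: mcA; try (apply: mcA; apply: measurableC; exact: mS).
  congr intn; apply/funext => v; rewrite -EFinD -mulrDr.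
  by rewrite !indicE in_setC; case: (v \in Sk k t) => /=; rewrite ?addr0 ?add0r mulr1.
rewrite ge0_fin_numE; last exact: intn_ge0.
apply: (@le_lt_trans _ _ 1%E); last exact: ltey.
rewrite -c1 e; apply: leeDl; exact: intn_ge0.
Qed.

Lemma key i s : (2 <= i <= d)%N -> 0 < s < 1 -> ~ Psi c i s ->
  intn (fun v => (c v * \1_(Sk i.-1 s `\` Sk i s) v)%:E) = 0%E.
Proof.
move=> hi hs hP.
have [hi1 hi2] := i_bounds hi.
have hsub : Sk i s `<=` Sk i.-1 s.
  move=> w; rewrite /Sk /= !ostat_leE // => h.
  by apply: i_mono h; case/andP: hi.
have mS1 := measurable_S s hi1.
have mS2 := measurable_S s hi2.
have e : mdiag c i.-1 s = (mdiag c i s +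
    intn (fun v => (c v * \1_(Sk i.-1 s `\` Sk i s) v)%:E))%E.
  rewrite /mdiag -intn_add //; try exact: mcA; try (apply: mcA; apply: measurableD; [exact: mS1|exact: mS2]).
  congr intn; apply/funext => v; rewrite -EFinD -mulrDr.
  rewrite !indicE in_setD; case: (boolP (v \in Sk i s)) => h.
    have h1 : v \in Sk i.-1 s by apply: mem_set; apply: hsub; exact: set_mem.
    by rewrite h1 /= addr0.
  by rewrite andbT add0r.
have fin := mdiag_fin i s hi2.
have : (mdiag c i.-1 s <= mdiag c i s)%E.
  by rewrite leNgt; apply/negP => hlt; apply: hP; split.
rewrite e -{2}(adde0 (mdiag c i s)) leeD2lE // => hle.
apply: le_anti; rewrite hle /=; exact: intn_ge0.
Qed.

Definition Pipq i (p q : rat) := exists s, (2 <= i <= d)%N /\ 0 < s < 1 /\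
  ~ Psi c i s /\ ratr p < s < ratr q.

Definition A3 i p q : set (d.-tuple R) :=
  if pselect (Pipq i p q) then
    (c @^-1` (~` [set 0])) `&` (Sk i.-1 (ratr p) `&` ~` Sk i (ratr q))
  else set0.

Definition Ak (k : nat) : set (d.-tuple R) :=
  if @unpickle (nat * rat * rat)%type k is Some x then A3 x.1.1 x.1.2 x.2 else set0.

Definition Abig := \bigcup_k Ak k.

Lemma mA3 i p q : measurable (A3 i p q).
Proof.
rewrite /A3; case: pselect => [hP|_] /=; last exact: measurable0.
case: hP => s [hi _].
have [hi1 hi2] := i_bounds hi.
apply: measurableI.
  have := mc measurableT; move/(_ _ (measurableC (measurable_set1 (0 : R)))).
  by rewrite setTI.
apply: measurableI; first exact: measurable_S.
apply: measurableC; exact: measurable_S.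
Qed.

Lemma mAk k : measurable (Ak k).
Proof. rewrite /Ak; case: unpickle => [x|]; [exact: mA3|exact: measurable0]. Qed.

Lemma mAbig : measurable Abig.
Proof. exact: bigcupT_measurable mAk. Qed.

Lemma lebn_set0 : lebn (@set0 (d.-tuple R)) = 0%E.
Proof.
rewrite /lebn (_ : (fun u => _) = fun _ => 0%E) ?intn0 //.
by apply/funext => u; rewrite indic0.
Qed.

Lemma lebn_A3 i p q : lebn (A3 i p q) = 0%E.
Proof.
have mA := mA3 i p q.
move: mA; rewrite /lebn /A3; case: pselect => [hPP|_] /= mA;
  last exact: lebn_set0.
case: (hPP) => s [hi [hs [hP hpq]]].
have [hi1 hi2] := i_bounds hi.
have mD : measurable (Sk i.-1 s `\` Sk i s).
  by apply: measurableD; exact: measurable_S.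
apply: (@intn_null R d (fun _ v => (c v * \1_(Sk i.-1 s `\` Sk i s) v)%:E)).
- by move=> _; exact: mcA.
- by move=> _ v; exact: cA0.
- exact: mI.
- by move=> v; exact: I0.
- by move=> _; exact: key.
move=> v hv; exists 0%N.
have : v \in (c @^-1` (~` [set 0])) `&` (Sk i.-1 (ratr p) `&` ~` Sk i (ratr q)).
  by apply/negPn/negP => h; move: hv; rewrite indicE (negbTE h) => /negP; apply; apply/eqP.
move=> /set_mem [/= hc [h1 h2]].
move/andP: hpq => [hps hsq].
have hD : v \in Sk i.-1 s `\` Sk i s.
  apply: mem_set; split.
    by rewrite /Sk /=; apply: le_trans h1 _; exact: ltW.
  rewrite /Sk /= => h3; apply: h2; rewrite /Sk /=; apply: le_trans h3 _; exact: ltW.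
by rewrite indicE hD mulr1 eqe; apply/eqP.
Qed.

Lemma lebn_Abig : lebn Abig = 0%E.
Proof.
rewrite /lebn.
apply: (@intn_null R d (fun k v => (\1_(Ak k) v)%:E)).
- by move=> k; apply: mI; exact: mAk.
- by move=> k v; exact: I0.
- apply: mI; exact: mAbig.
- by move=> v; exact: I0.
- move=> k; rewrite -/(lebn (Ak k)) /Ak; case: unpickle => [x|].
    exact: lebn_A3.
  exact: lebn_set0.
move=> v hv.
have : v \in Abig by apply/negPn/negP => h; move: hv; rewrite indicE (negbTE h) => /negP; apply; apply/eqP.
move=> /set_mem [k _ hk]; exists k.
by rewrite indicE mem_set //= eqe oner_neq0.
Qed.

Lemma in_Abig u i s : unit_cube u -> c u != 0 -> (2 <= i <= d)%N ->
  ostat u i.-1 < s < ostat u i -> ~ Psi c i s -> Abig u.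
Proof.
move=> hu hc hi /andP[h1 h2] hP.
have [hi1 hi2] := i_bounds hi.
have /andP[b1 _] := ostat_cube hu hi1.
have /andP[_ b2] := ostat_cube hu hi2.
have [p] := rat_in_itvoo h1; rewrite in_itv /= => /andP[p1 p2].
have [q] := rat_in_itvoo h2; rewrite in_itv /= => /andP[q1 q2].
exists (pickle (i, p, q)) => //.
rewrite /Ak pickleK /= /A3; case: pselect => [hPP|nP] /=; last first.
  exfalso; apply: nP; exists s; split => //; split.
    by rewrite (le_lt_trans b1 h1) (lt_le_trans h2 b2).
  by split => //; rewrite p2 q1.
split; first by move=> /= /eqP; rewrite (negbTE hc).
split; first by rewrite /Sk /=; exact: ltW.
by rewrite /Sk /= => h; move: (lt_le_trans q2 h); rewrite ltxx.
Qed.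

End Main.

Theorem mainTheorem17 (R : realType) (d : nat) (C c : d.-tuple R -> R) :
  abs_cont_copula_density C c ->
  (* for a.e. u in I^d, for all 2 <= i <= d and s in I \ Psi_i,
     c(u) 1_{u_(i-1) < s < u_(i)} = 0 *)
  lebn_null [set u | unit_cube u /\
     ~ (forall i : nat, (2 <= i <= d)%N ->
        forall s : R, 0 <= s <= 1 -> ~ Psi c i s ->
          c u * (\1_[set t | ostat u i.-1 < t < ostat u i] s : R) = 0)]
  /\
  (* equivalently: c = 0 a.e. on I^d \ L_delta *)
  lebn_null [set u | (@unit_cube R d `\` Ldelta c) u /\ c u != 0].
Proof.
move=> H; split; exists (@Abig R d c); split.
- exact: (@mAbig R d C c H).
- move=> u [hu /existsNP [i /not_implyP [hi /existsNP [s /not_implyP [hs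
    /not_implyP [hP hne]]]]]].
  apply: (@in_Abig R d c u i s hu _ hi _ hP).
    by apply/eqP => cu0; apply: hne; rewrite cu0 mul0r.
  case: (boolP (ostat u i.-1 < s < ostat u i)) => h //; exfalso; apply: hne.
  by rewrite indicE memNset ?mulr0 //= => h'; rewrite h' in h.
- exact: (@lebn_Abig R d C c H).
- exact: (@mAbig R d C c H).
- move=> u [[hu hnL] hc].
  have : ~ (forall i, (2 <= i <= d)%N ->
      [set s | ostat u i.-1 < s < ostat u i] `<=` Psi c i).
    by move=> h; apply: hnL; split.
  move=> /existsNP [i /not_implyP [hi /existsNP [s /not_implyP [hs hP]]]].
  exact: (@in_Abig R d c u i s hu hc hi hs hP).
- exact: (@lebn_Abig R d C c H).
Qed.
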